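(* Fix indices $\alpha\neq\beta$, $\gamma$, and an integer $l\in\mathbb{Z}$. For the formal operator $X_l=\sum_{x<y+l}q_\alpha(x)q_\beta(y)$ one has, as formal sums, $$ i\,[X_l,Q_\gamma]=\sum_{x\in\mathbb{Z}}\Big[J_{\alpha,\gamma}(x+l)\,q_\beta(x)-q_\alpha(x+l)\,J_{\beta,\gamma}(x+1)\Big].$$ Moreover, on a periodic chain, for any normalized $|\Psi\rangle$ that is a simultaneous eigenvector of the translation operator and of $Q_\gamma$, the expectation value $\langle\Psi|J_{\alpha,\gamma}(x+l)\,q_\beta(x)-q_\alpha(x+l)\,J_{\beta,\gamma}(x+1)|\Psi\rangle$ does not depend on $l$ (nor on $x$).
   Context: Spin chain with sites $x\in\mathbb{Z}$ (infinite chain for the commutator identity; periodic chain of length $L$, sites mod $L$, for the expectation value statement) and local space $\mathbb{C}^N$; $U$ denotes the unitary one-site translation and a local operator family is translation covariant if $\mathcal{O}(x+1)=U\mathcal{O}(x)U^{-1}$. There is a family of mutually commuting, translation invariant conserved charges $Q_\alpha=\sum_x q_\alpha(x)$ with translation covariant local densities $q_\alpha(x)$. The generalized currents $J_{\alpha,\beta}(x)$ are translation covariant local operators defined by $$ i\,[Q_\beta,q_\alpha(x)]=J_{\alpha,\beta}(x)-J_{\alpha,\beta}(x+1)\quad\text{for all }x,$$ so that on the infinite chain $i[Q_\beta,\sum_{y>x}q_\alpha(y)]=J_{\alpha,\beta}(x+1)$ and $i[Q_\beta,\sum_{y<x}q_\alpha(y)]=-J_{\alpha,\beta}(x)$. Commutators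 of formal sums are computed term by term. *)

(* Defs.v *)
From HB Require Import structures.
From mathcomp Require Import all_boot all_order all_algebra all_field.
Set Implicit Arguments. Unset Strict Implicit. Unset Printing Implicit Defensive.
Import GRing.Theory Num.Theory.
Local Open Scope ring_scope.

(* [fsum_eq tau a b] : the formal sums  \sum_{x in Z} tau^x(a)  and
   \sum_{x in Z} tau^x(b)  are equal as formal sums, i.e. their densities
   differ by a total difference  c - tau c  (so the two sums agree after
   term-by-term reindexing x -> x+1 and telescoping, boundary terms at
   infinity being dropped, as in the paper's formal calculus). *)
Definition fsum_eq (B : pzRingType) (tau : B -> B) (a b : B) : Prop :=
  exists c : B, a - b = c - tau c.

Definition adjmx (m n : nat) (A : 'M[algC]_(m, n)) : 'M[algC]_(n, m) :=
  (map_mx Num.conj A)^T.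

Definition expval (n : nat) (Psi : 'cV[algC]_n) (A : 'M[algC]_n) : algC :=
  (adjmx Psi *m A *m Psi) 0 0.

Definition charge (n L : nat) (q : int -> 'M[algC]_n) : 'M[algC]_n :=
  \sum_(0 <= x < L) q (x%:Z).

(* Main.v *)
Require Import Defs.
From HB Require Import structures.
From mathcomp Require Import all_boot all_order all_algebra all_field.
Import GRing.Theory Num.Theory.
Local Open Scope ring_scope.


Lemma adjmxM (m n p : nat) (A : 'M[algC]_(m, n)) (B : 'M[algC]_(n, p)) :
  adjmx (A *m B) = adjmx B *m adjmx A.
Proof. by rewrite /adjmx map_mxM trmx_mul. Qed.

Lemma adjmxZ (m n : nat) (c : algC) (A : 'M[algC]_(m, n)) :
  adjmx (c *: A) = (c^* ) *: adjmx A.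
Proof. by rewrite /adjmx map_mxZ linearZ. Qed.

Lemma adjmxK (m n : nat) (A : 'M[algC]_(m, n)) : adjmx (adjmx A) = A.
Proof. by apply/matrixP=> i j; rewrite !mxE conjCK. Qed.

Lemma scal1_eq (c d : algC) : c *: (1%:M : 'M[algC]_1) = d *: 1%:M -> c = d.
Proof. by move=> /matrixP /(_ 0 0); rewrite !mxE /= !mulr1. Qed.

Lemma int_const (g : int -> 'M[algC]_1) :
  (forall z, g (z + 1) = g z) -> forall z, g z = g 0.
Proof.
move=> H; case=> n.
  elim: n => [//|n IH].
  have ->: Posz n.+1 = n%:Z + 1 by rewrite -addn1 PoszD.
  by rewrite H.
elim: n => [|n IH].
  by rewrite -H.
rewrite -IH -H; congr g.
by rewrite !NegzE -addn1 PoszD opprD addrNK.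
Qed.

Lemma zm (V : zmodType) (a b c d : V) : -(-a + (b - c)) - (a - d) = -b + (c + d).
Proof. by rewrite !opprD !opprK (addrC a) -!addrA addNKr. Qed.

Lemma zm2 (V : zmodType) (a b c d : V) : (a - b) + (c - d) = 0 -> b - c = a - d.
Proof. move=> Z; apply/eqP; rewrite -subr_eq0.
have ->: b - c - (a - d) = - ((a - b) + (c - d)).
  by rewrite !opprD !opprK addrACA (addrC b).
by rewrite Z oppr0. Qed.

Theorem mainTheorem3 (I : Type) (alpha beta gamma : I) (hab : alpha <> beta) :
  (* Part 1: infinite chain, formal commutator identity, for every l. *)
  (forall (l : int)
     (B : pzRingType)                      (* (quasi-)local operators + formal half-infinite sums *)
     (tau : {rmorphism B -> B})            (* O |-> U O U^-1 *)
     (D : I -> B -> B)                     (* D b O = i [Q_b, O], computed term by term *)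
     (q : I -> int -> B)                   (* densities q_a(x) *)
     (J : I -> I -> int -> B)              (* currents J_{a,b}(x) *)
     (Lq : I -> int -> B),                 (* Lq a x = \sum_{y < x} q_a(y) (formal) *)
     (forall b u v, D b (u + v) = D b u + D b v) ->
     (forall b u v, D b (u * v) = D b u * v + u * D b v) ->
     (forall b u, D b (tau u) = tau (D b u)) ->
     (forall a x, q a (x + 1) = tau (q a x)) ->
     (forall a b x, J a b (x + 1) = tau (J a b x)) ->
     (forall a b x, D b (q a x) = J a b x - J a b (x + 1)) ->
     (forall a x, Lq a (x + 1) = Lq a x + q a x) ->
     (forall a x, Lq a (x + 1) = tau (Lq a x)) ->
     (forall a b x, D b (Lq a x) = - J a b x) ->
     (* X_l = \sum_{x<y+l} q_a(x) q_b(y) = \sum_y tau^y (Lq alpha l * q beta 0),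
        so i[X_l, Q_gamma] = - \sum_y tau^y (D gamma (Lq alpha l * q beta 0)) *)
     fsum_eq tau (- D gamma (Lq alpha l * q beta 0))
                 (J alpha gamma (0 + l) * q beta 0 - q alpha (0 + l) * J beta gamma (0 + 1)))
  /\
  (* Part 2: periodic chain of length L, Hilbert space C^n. *)
  (forall (n L : nat) (hL : (0 < L)%N)
     (U : 'M[algC]_n)
     (q : I -> int -> 'M[algC]_n)
     (J : I -> I -> int -> 'M[algC]_n)
     (Psi : 'cV[algC]_n) (mu lambda : algC),
     adjmx U *m U = 1%:M ->
     U *m adjmx U = 1%:M ->
     (forall a x, q a (x + L%:Z) = q a x) ->
     (forall a b x, J a b (x + L%:Z) = J a b x) ->
     (forall a x, q a (x + 1) = U *m q a x *m invmx U) ->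
     (forall a b x, J a b (x + 1) = U *m J a b x *m invmx U) ->
     (forall a b x, 'i *: (charge L (q b) *m q a x - q a x *m charge L (q b))
                    = J a b x - J a b (x + 1)) ->
     adjmx (charge L (q gamma)) = charge L (q gamma) ->
     adjmx Psi *m Psi = 1%:M ->
     U *m Psi = mu *: Psi ->
     charge L (q gamma) *m Psi = lambda *: Psi ->
     forall (l1 l2 x1 x2 : int),
       expval Psi (J alpha gamma (x1 + l1) *m q beta x1
                   - q alpha (x1 + l1) *m J beta gamma (x1 + 1))
       = expval Psi (J alpha gamma (x2 + l2) *m q beta x2
                     - q alpha (x2 + l2) *m J beta gamma (x2 + 1))).
Proof.
split.
  move=> l B tau D q J Lq HDa HDm HDt Hqt HJt HDq HL1 HLt HDL.
  exists (- (Lq alpha l * J beta gamma 0)).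
  rewrite rmorphN rmorphM -HLt -HJt HDm HDL HDq HL1 !add0r.
  rewrite mulrBr mulrDl; set a := J alpha gamma l * q beta 0.
  by rewrite mulNr opprK zm.
move=> n L hL U q J P mu lambda HUU HUU' _ _ Hqt HJt Hcom Hherm Hnorm HUP HQP l1 l2 x1 x2.
have [Uu _] := mulmx1_unit HUU'.
have Hinv : invmx U = adjmx U.
  by rewrite -[invmx U]mulmx1 -HUU' mulmxA mulVmx // mul1mx.
have E2 : P = mu *: (adjmx U *m P) by rewrite scalemxAr -HUP mulmxA HUU mul1mx.
have HPU : adjmx P = mu^* *: (adjmx P *m U).
  by rewrite {1}E2 adjmxZ adjmxM adjmxK.
have Hc : mu^* * mu = 1.
  apply: scal1_eq; rewrite scale1r -Hnorm.
  have E : adjmx P *m P = adjmx (U *m P) *m (U *m P).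
    by rewrite adjmxM mulmxA -(mulmxA (adjmx P)) HUU mulmx1.
  by rewrite [in RHS]E HUP adjmxZ -scalemxAl -scalemxAr scalerA.
have HT : forall A : 'M[algC]_n, adjmx P *m (U *m A *m invmx U) *m P = adjmx P *m A *m P.
  move=> A; rewrite Hinv.
  have -> : adjmx P *m A *m P
     = (mu^* *: (adjmx P *m U)) *m A *m (mu *: (adjmx U *m P)) by rewrite -HPU -E2.
  by rewrite -!scalemxAl -scalemxAr scalerA Hc scale1r !mulmxA.
have HM : forall A B : 'M[algC]_n, (U *m A *m invmx U) *m (U *m B *m invmx U) = U *m (A *m B) *m invmx U.
  move=> A B; rewrite !mulmxA -(mulmxA _ (invmx U) U) mulVmx // mulmx1.
  by [].
have HPQ : adjmx P *m (charge L (q gamma)) = lambda^* *: adjmx P.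
  by rewrite -{1}Hherm -adjmxM HQP adjmxZ.
have Hl : lambda^* = lambda.
  apply: scal1_eq; rewrite -Hnorm scalemxAl -HPQ -mulmxA HQP -scalemxAr //.
have HC : forall A : 'M[algC]_n, adjmx P *m ((charge L (q gamma)) *m A - A *m (charge L (q gamma))) *m P = 0.
  move=> A; rewrite mulmxBr mulmxBl !mulmxA HPQ -!mulmxA HQP -scalemxAl -!scalemxAr.
  by rewrite Hl subrr.
pose E l x := adjmx P *m (J alpha gamma (x + l) *m q beta x
                   - q alpha (x + l) *m J beta gamma (x + 1)) *m P.
have EX : forall l x, E l (x + 1) = E l x.
  move=> l x; rewrite /E (addrAC x 1 l) (Hqt beta x) (Hqt alpha (x + l))
    (HJt alpha gamma (x + l)) (HJt beta gamma (x + 1)) !HM -mulmxBl -mulmxBr.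
  by rewrite HT.
have EY : forall l, E (l + 1) 0 = E l 0.
  move=> l; rewrite /E !add0r.
  have K : (charge L (q gamma)) *m (q alpha l *m q beta 0) - (q alpha l *m q beta 0) *m (charge L (q gamma))
     = ((charge L (q gamma)) *m q alpha l - q alpha l *m (charge L (q gamma))) *m q beta 0
       + q alpha l *m ((charge L (q gamma)) *m q beta 0 - q beta 0 *m (charge L (q gamma))).
    by rewrite mulmxBl mulmxBr !mulmxA addrA addrNK.
  have Z := HC (q alpha l *m q beta 0).
  move: Z; rewrite K => /(congr1 (fun M => 'i *: M)).
  rewrite scaler0 scalemxAl scalemxAr scalerDr scalemxAl scalemxAr
    (Hcom alpha gamma l) (Hcom beta gamma 0) add0r.
  rewrite !(mulmxBr, mulmxBl, mulmxDr, mulmxDl, mulmxN, mulNmx) => Z.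
  have -> : adjmx P *m (q alpha (l + 1) *m J beta gamma 1) *m P
          = adjmx P *m (q alpha l *m J beta gamma 0) *m P.
    rewrite (Hqt alpha l) (_ : J beta gamma 1 = U *m J beta gamma 0 *m invmx U).
      by rewrite HM HT.
    by rewrite -(HJt beta gamma 0) add0r.
  by apply: zm2.
have EE : forall l x, E l x = E 0 0.
  move=> l x; rewrite (@int_const (E l) (EX l) x).
  exact: (@int_const (fun l => E l 0) EY l).
rewrite /expval.
move: (EE l1 x1) (EE l2 x2); rewrite /E => -> -> //.
Qed.
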